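(* Let $\mathcal{P}$ be a set of mutually commuting Pauli operators on $n$ qubits generated by $r$ independent Pauli operators. The qubitwise diagonalization algorithm described in the context, with the logarithmic-depth version of Step 2 and with a null vector of symplectic weight at most $r^{(\alpha)}+1$ chosen at each stage $\alpha$, outputs a Clifford circuit that simultaneously diagonalizes all operators in $\mathcal{P}$, in which each stage has depth $O(\log r^{(\alpha)})$ and the whole circuit has depth $O(n\log r)$, assuming two-qubit gates that share a qubit cannot be executed in parallel while gates on disjoint qubits can.
   Context: A Pauli operator on $m$ qubits is encoded, up to phase, by $u=(\boldsymbol{x},\boldsymbol{z})\in\mathbb{F}_2^{2m}$ via $P=\bigotimes_{j=1}^m X^{x_j}Z^{z_j}$. For a set of Pauli operators, the tableau $(\mathcal{X}\mid\mathcal{Z})$ is the binary matrix whose rows encode the operators; the number of independent generators is its $\mathbb{F}_2$-rank. An operator is diagonal on qubit $j$ if its $j$-th tensor factor is $I$ or $Z$. The symplectic weight of $(\boldsymbol{v},\boldsymbol{w})\in\mathbb{F}_2^{2m}$ is $\omega(\boldsymbol{v},\boldsymbol{w})=|\{j: (v_j,w_j)\neq(0,0)\}|$. Qubitwise diagonalization algorithm. At stage $\alpha$: discard the qubits on which all operators are already diagonal; let $n^{(\alpha)}$ be the number of remaining qubits (stop if $n^{(\alpha)}=0$); let $T^{(\alpha)}$ be an independent generating set of the operators restricted to the remaining qubits, of size $r^{(\alpha)}$, with $r^{(\alpha)}\times 2n^{(\alpha)}$ tableau $M^{(\alpha)}$. Choose a nonzero $(\boldsymbol{v},\boldsymbol{w})$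 with $M^{(\alpha)}(\boldsymbol{v};\boldsymbol{w})=0$ over $\mathbb{F}_2$. Step 1: for each qubit $j$, if $v_j=0,w_j=1$ conjugate by a Hadamard $\mathrm{H}(j)$; if $v_j=w_j=1$ conjugate by the phase gate $\mathrm{S}(j)$ and then $\mathrm{H}(j)$. Step 2 (logarithmic-depth version): let $Q=(q_1,q_2,\dots)$ list the qubits $q$ with $(v_q,w_q)\neq(0,0)$; while $|Q|>1$, conjugate by $\mathrm{CNOT}(q_{2j},q_{2j-1})$ (control $q_{2j}$, target $q_{2j-1}$) for $j=1,\dots,\lfloor |Q|/2\rfloor$, then remove $q_{2},q_4,\dots,q_{2\lfloor|Q|/2\rfloor}$ from $Q$. Then proceed to stage $\alpha+1$. The output circuit is the composition of all gates used. *)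

(* Defs.v *)
From HB Require Import structures.
From mathcomp Require Import all_boot all_order all_algebra.
Set Implicit Arguments. Unset Strict Implicit. Unset Printing Implicit Defensive.
Import GRing.Theory.
Local Open Scope ring_scope.

(* A Pauli operator on n qubits, up to phase: the row (x | z) in F_2^{2n}. *)
Definition pauli (n : nat) := 'rV['F_2]_(n + n).

Definition xpart n (p : pauli n) (j : 'I_n) : 'F_2 := p 0 (lshift n j).
Definition zpart n (p : pauli n) (j : 'I_n) : 'F_2 := p 0 (rshift n j).

Definition qubit_of n (k : 'I_(n + n)) : 'I_n :=
  match split k with inl j => j | inr j => j end.

Definition mkpauli n (fx fz : 'I_n -> 'F_2) : pauli n :=
  \row_k match split k with inl j => fx j | inr j => fz j end.

(* symplectic form; two Pauli operators commute iff it vanishes *)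
Definition symp n (p q : pauli n) : 'F_2 :=
  \sum_(j < n) (xpart p j * zpart q j + zpart p j * xpart q j).

Definition commuting n (P : seq (pauli n)) : Prop :=
  forall p q, p \in P -> q \in P -> symp p q = 0.

Definition tableau n (ops : seq (pauli n)) : 'M['F_2]_(size ops, n + n) :=
  \matrix_(i < size ops) nth 0 ops i.

Definition ngen n (ops : seq (pauli n)) : nat := \rank (tableau ops).

(* an operator is diagonal on qubit j iff its factor is I or Z *)
Definition diag_on n (p : pauli n) (j : 'I_n) : bool := xpart p j == 0.

Definition all_diag n (ops : seq (pauli n)) : bool :=
  all (fun p => [forall j, diag_on p j]) ops.

Definition remaining n (ops : seq (pauli n)) : {set 'I_n} :=
  [set j | ~~ all (fun p => diag_on p j) ops].

Definition restr n (R : {set 'I_n}) (p : pauli n) : pauli n :=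
  \row_k (if qubit_of k \in R then p 0 k else 0).

Definition restr_tableau n (ops : seq (pauli n)) :=
  tableau (map (restr (remaining ops)) ops).

Definition vpart n (u : 'cV['F_2]_(n + n)) (j : 'I_n) : 'F_2 := u (lshift n j) 0.
Definition wpart n (u : 'cV['F_2]_(n + n)) (j : 'I_n) : 'F_2 := u (rshift n j) 0.

Definition supp n (u : 'cV['F_2]_(n + n)) : {set 'I_n} :=
  [set j | (vpart u j != 0) || (wpart u j != 0)].

Definition sweight n (u : 'cV['F_2]_(n + n)) : nat := #|supp u|.

Inductive gate (n : nat) :=
| GH of 'I_n
| GS of 'I_n
| GCNOT of 'I_n & 'I_n.   (* GCNOT control target *)

Definition gate_qubits n (g : gate n) : seq 'I_n :=
  match g with GH j => [:: j] | GS j => [:: j] | GCNOT c t => [:: c; t] end.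

(* conjugation action of a gate on a Pauli operator (up to phase) *)
Definition apply_gate n (g : gate n) (p : pauli n) : pauli n :=
  let x := xpart p in let z := zpart p in
  match g with
  | GH j => mkpauli (fun i => if i == j then z i else x i)
                    (fun i => if i == j then x i else z i)
  | GS j => mkpauli x (fun i => if i == j then z i + x i else z i)
  | GCNOT c t => mkpauli (fun i => if i == t then x t + x c else x i)
                         (fun i => if i == c then z c + z t else z i)
  end.

Definition apply_circuit n (gs : seq (gate n)) (p : pauli n) : pauli n :=
  foldl (fun q g => apply_gate g q) p gs.

(* circuit depth: gates sharing a qubit are sequential, gates on disjoint
   qubits may run in parallel (ASAP layering of the gate sequence). *)
Definition depth_step n (t : 'I_n -> nat) (g : gate n) : 'I_n -> nat :=
  let d := (\max_(q <- gate_qubits g) t q).+1 in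
  fun q => if q \in gate_qubits g then d else t q.

Definition depth n (gs : seq (gate n)) : nat :=
  let t := foldl (@depth_step n) (fun _ => 0%N) gs in \max_(q : 'I_n) t q.

Definition step1_gates n (u : 'cV['F_2]_(n + n)) (Q : seq 'I_n) : seq (gate n) :=
  flatten [seq (if (vpart u j == 0) && (wpart u j == 1) then [:: GH j]
                else if (vpart u j == 1) && (wpart u j == 1) then [:: GS j; GH j]
                else [::]) | j <- Q].

Fixpoint pair_round n (Q : seq 'I_n) : seq (gate n) * seq 'I_n :=
  match Q with
  | a :: b :: rest => let: (gs, keep) := pair_round rest in
                      (GCNOT b a :: gs, a :: keep)
  | _ => ([::], Q)
  end.

Fixpoint tree_gates_fuel n (fuel : nat) (Q : seq 'I_n) : seq (gate n) :=
  match fuel with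
  | 0 => [::]
  | f.+1 => if (size Q <= 1)%N then [::]
            else let: (gs, keep) := pair_round Q in gs ++ tree_gates_fuel f keep
  end.

Definition step2_gates n (Q : seq 'I_n) : seq (gate n) := tree_gates_fuel (size Q) Q.

(* choices made at a stage: generating set T (as its tableau M, of size r),
   null vector u = (v ; w), and the listing Q of its support *)
Record choice (n : nat) := MkChoice {
  ch_r : nat;
  ch_M : 'M['F_2]_(ch_r, n + n);
  ch_u : 'cV['F_2]_(n + n);
  ch_Q : seq 'I_n }.

Definition stage_gates n (ch : choice n) : seq (gate n) :=
  step1_gates (ch_u ch) (ch_Q ch) ++ step2_gates (ch_Q ch).

Definition valid_stage n (ops : seq (pauli n)) (ch : choice n) : Prop :=
  [/\ remaining ops != set0,
      row_free (ch_M ch),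
      (ch_M ch == restr_tableau ops)%MS,
      ch_u ch != 0
    & ch_M ch *m ch_u ch == 0] /\
  [/\ supp (ch_u ch) \subset remaining ops,
      (sweight (ch_u ch) <= ch_r ch + 1)%N,
      uniq (ch_Q ch)
    & ch_Q ch =i supp (ch_u ch)].

Definition apply_stage n (ops : seq (pauli n)) (ch : choice n) : seq (pauli n) :=
  map (apply_circuit (stage_gates ch)) ops.

Fixpoint valid_run n (ops : seq (pauli n)) (chs : seq (choice n)) : Prop :=
  match chs with
  | [::] => True
  | ch :: chs' => valid_stage ops ch /\ valid_run (apply_stage ops ch) chs'
  end.

Definition final_ops n (ops : seq (pauli n)) (chs : seq (choice n)) :=
  foldl (@apply_stage n) ops chs.

Definition output_circuit n (chs : seq (choice n)) : seq (gate n) :=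
  flatten (map (@stage_gates n) chs).

(* Main.v *)
Require Import Defs.
From HB Require Import structures.
From mathcomp Require Import all_boot all_order all_algebra.
From mathcomp Require Import zify ring.
Import GRing.Theory.
Local Open Scope ring_scope.
Set Implicit Arguments. Unset Strict Implicit.

Lemma F2_cases (a : 'F_2) : a = 0 \/ a = 1.
Proof. case: a => [[|[|k]]] Hk. - by left; apply: val_inj. - by right; apply: val_inj. - by []. Qed.

Lemma F2_add_self (a : 'F_2) : a + a = 0.
Proof. case: (F2_cases a) => ->; first by rewrite addr0. by apply: val_inj. Qed.

Lemma split_l n (j : 'I_n) : split (lshift n j) = inl j.
Proof. exact: (unsplitK (inl _ j)). Qed.
Lemma split_r n (j : 'I_n) : split (rshift n j) = inr j.
Proof. exact: (unsplitK (inr _ j)). Qed.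

Lemma xpart_mk n fx fz (j : 'I_n) : xpart (mkpauli fx fz) j = fx j.
Proof. by rewrite /xpart /mkpauli mxE split_l. Qed.
Lemma zpart_mk n fx fz (j : 'I_n) : zpart (mkpauli fx fz) j = fz j.
Proof. by rewrite /zpart /mkpauli mxE split_r. Qed.

Section Gates.
Variable n : nat.
Implicit Types (p q : pauli n) (g : gate n) (gs : seq (gate n)) (i j c t : 'I_n).

Lemma xH j p i : xpart (apply_gate (GH j) p) i = if i == j then zpart p i else xpart p i.
Proof. by rewrite /apply_gate xpart_mk. Qed.
Lemma zH j p i : zpart (apply_gate (GH j) p) i = if i == j then xpart p i else zpart p i.
Proof. by rewrite /apply_gate zpart_mk. Qed.
Lemma xS j p i : xpart (apply_gate (GS j) p) i = xpart p i.
Proof. by rewrite /apply_gate xpart_mk. Qed.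
Lemma zS j p i : zpart (apply_gate (GS j) p) i = if i == j then zpart p i + xpart p i else zpart p i.
Proof. by rewrite /apply_gate zpart_mk. Qed.
Lemma xC c t p i : xpart (apply_gate (GCNOT c t) p) i =
  if i == t then xpart p t + xpart p c else xpart p i.
Proof. by rewrite /apply_gate xpart_mk. Qed.
Lemma zC c t p i : zpart (apply_gate (GCNOT c t) p) i =
  if i == c then zpart p c + zpart p t else zpart p i.
Proof. by rewrite /apply_gate zpart_mk. Qed.

Lemma gate_untouched g p i : i \notin gate_qubits g ->
  xpart (apply_gate g p) i = xpart p i /\ zpart (apply_gate g p) i = zpart p i.
Proof.
case: g => [j|j|c t] /=; rewrite !inE.
- by move=> /negbTE h; rewrite xH zH h.
- by move=> /negbTE h; rewrite xS zS h.
- by case/norP => /negbTE h1 /negbTE h2; rewrite xC zC h1 h2.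
Qed.

Lemma apply_circuit_cons g gs p : apply_circuit (g :: gs) p = apply_circuit gs (apply_gate g p).
Proof. by []. Qed.
Lemma apply_circuit_cat gs1 gs2 p :
  apply_circuit (gs1 ++ gs2) p = apply_circuit gs2 (apply_circuit gs1 p).
Proof. by rewrite /apply_circuit foldl_cat. Qed.

Lemma circuit_untouched gs p i :
  all (fun g => i \notin gate_qubits g) gs ->
  xpart (apply_circuit gs p) i = xpart p i /\ zpart (apply_circuit gs p) i = zpart p i.
Proof.
elim: gs p => [|g gs IH] p; first by []. move=> /andP[H1 H2].
rewrite apply_circuit_cons.
have [h1 h2] := gate_untouched p H1.
have [h3 h4] := IH (apply_gate g p) H2.
by rewrite h3 h4 h1 h2.
Qed.

End Gates.

Section Step1.
Variable n : nat.
Implicit Types (p q : pauli n) (g : gate n) (gs : seq (gate n)) (i j c t : 'I_n).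
Variable u : 'cV['F_2]_(n + n).

Definition blk j : seq (gate n) :=
  if (vpart u j == 0) && (wpart u j == 1) then [:: GH j]
  else if (vpart u j == 1) && (wpart u j == 1) then [:: GS j; GH j]
  else [::].

Lemma step1_cons j Q : step1_gates u (j :: Q) = blk j ++ step1_gates u Q.
Proof. by []. Qed.

Lemma blk_qubits j : all (fun g => all (fun k => k == j) (gate_qubits g)) (blk j).
Proof. by rewrite /blk; case: ifP => _; [|case: ifP => _] => /=; rewrite ?eqxx. Qed.

Lemma blk_x j p : j \in supp u ->
  xpart (apply_circuit (blk j) p) j = vpart u j * xpart p j + wpart u j * zpart p j.
Proof.
rewrite /supp inE /blk.
case: (F2_cases (vpart u j)) => ->; case: (F2_cases (wpart u j)) => -> //= _.
- by rewrite xH eqxx mul0r mul1r add0r.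
- by rewrite mul1r mul0r addr0.
- by rewrite !xpart_mk !zpart_mk !eqxx !mul1r addrC.
Qed.

Lemma blk_other j p i : i != j ->
  xpart (apply_circuit (blk j) p) i = xpart p i /\ zpart (apply_circuit (blk j) p) i = zpart p i.
Proof.
move=> hij; apply: circuit_untouched.
have := blk_qubits j; apply: sub_all => g /allP H; apply/negP => /H /eqP E.
by rewrite E eqxx in hij.
Qed.

Lemma step1_x Q p i : uniq Q -> {subset Q <= supp u} ->
  xpart (apply_circuit (step1_gates u Q) p) i =
    if i \in Q then vpart u i * xpart p i + wpart u i * zpart p i else xpart p i.
Proof.
elim: Q p => [|j Q IH] p //= /andP[jQ uQ] sQ.
rewrite step1_cons apply_circuit_cat IH //; last by move=> x hx; apply: sQ; rewrite inE hx orbT.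
rewrite inE; case: (eqVneq i j) => [->|hij] /=.
  by rewrite (negbTE jQ) blk_x // sQ // mem_head.
have [h1 h2] := blk_other p hij.
by case: ifP => _; rewrite h1 ?h2.
Qed.

Lemma step1_qubits Q : all (fun g => all (fun k => k \in Q) (gate_qubits g)) (step1_gates u Q).
Proof.
elim: Q => [|j Q IH] //; rewrite step1_cons all_cat; apply/andP; split.
  by apply: sub_all (blk_qubits j) => g; apply: sub_all => k /eqP ->; rewrite mem_head.
by apply: sub_all IH => g; apply: sub_all => k hk; rewrite inE hk orbT.
Qed.

End Step1.

Section Pair.
Variable n : nat.
Implicit Types (p q : pauli n) (g : gate n) (gs : seq (gate n)) (i j c t a b : 'I_n) (Q rest : seq 'I_n).

Lemma pair_ind (Pr : seq 'I_n -> Prop) : Pr [::] -> (forall a, Pr [:: a]) ->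
  (forall a b rest, Pr rest -> Pr [:: a, b & rest]) -> forall Q, Pr Q.
Proof.
move=> H0 H1 H2 Q; move: {2}(size Q) (leqnn (size Q)) => N.
elim: N Q => [|N IH] [|a [|b rest]] //= Hs.
apply: H2; apply: IH; move: Hs; lia.
Qed.

Definition good g := match g with GCNOT c t => c != t | _ => true end.
Definition gq Q g := all (fun k => k \in Q) (gate_qubits g).

Lemma pair_cons a b rest : pair_round [:: a, b & rest] =
  (GCNOT b a :: (pair_round rest).1, a :: (pair_round rest).2).
Proof. by rewrite /=; case: (pair_round rest). Qed.
Lemma pr1 a b rest : (pair_round [:: a, b & rest]).1 = GCNOT b a :: (pair_round rest).1.
Proof. by rewrite pair_cons. Qed.
Lemma pr2 a b rest : (pair_round [:: a, b & rest]).2 = a :: (pair_round rest).2.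
Proof. by rewrite pair_cons. Qed.

Lemma pair_size Q : ((size (pair_round Q).2).*2 <= (size Q).+1)%N.
Proof. elim/pair_ind: Q => // a b rest IH; rewrite pair_cons /=; lia. Qed.

Lemma pair_subseq Q : subseq (pair_round Q).2 Q.
Proof.
elim/pair_ind: Q => // a b rest IH; rewrite pair_cons.
have h1 : subseq (a :: (pair_round rest).2) (a :: rest).
  by have := subseq_cat2l [:: a] (pair_round rest).2 rest; rewrite /= => ->.
apply: subseq_trans h1 _.
by have := subseq_cat2l [:: a] rest (b :: rest); rewrite /= => ->; apply: subseq_cons.
Qed.

Lemma pair_head d Q : head d (pair_round Q).2 = head d Q.
Proof. by case: Q => [|a [|b rest]] //; rewrite pair_cons. Qed.

Lemma pair_qubits Q : all (gq Q) (pair_round Q).1.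
Proof.
elim/pair_ind: Q => // a b rest IH; rewrite pair_cons /=.
rewrite /gq /= !inE !eqxx orbT /=; apply: sub_all IH => g; apply: sub_all => k hk.
by rewrite !inE hk !orbT.
Qed.

Lemma pair_good Q : uniq Q -> all (fun g => good g) (pair_round Q).1.
Proof.
elim/pair_ind: Q => // a b rest IH; rewrite pair_cons /= inE negb_or.
case/andP => /andP[hab _] /andP[_ u]; rewrite eq_sym hab /=; exact: IH.
Qed.

Lemma pair_sum Q p : uniq Q ->
  \sum_(k <- (pair_round Q).2) xpart (apply_circuit (pair_round Q).1 p) k =
  \sum_(k <- Q) xpart p k.
Proof.
elim/pair_ind: Q p => // a b rest IH p; rewrite pr1 pr2 !cons_uniq !inE negb_or.
case/andP => /andP[hab har] /andP[hbr ur].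
rewrite !big_cons apply_circuit_cons IH //.
have hu : all (fun g => a \notin gate_qubits g) (pair_round rest).1.
  apply: sub_all (pair_qubits rest) => g /allP h; apply/negP => /h ha.
  by rewrite ha in har.
have [-> _] := circuit_untouched (apply_gate (GCNOT b a) p) hu.
rewrite xC eqxx addrA; congr (_ + _).
apply: eq_big_seq => k hk; rewrite xC; case: eqP => // E.
by rewrite -E hk in har.
Qed.

Lemma pair_depth Q (t : 'I_n -> nat) : uniq Q -> (forall k, k \in Q -> t k = 0%N) ->
  forall k, (foldl (@depth_step n) t (pair_round Q).1 k <= if k \in Q then 1 else t k)%N.
Proof.
elim/pair_ind: Q t => [t _ H k|a t _ H k|a b rest IH t]; rewrite ?leqnn //.
  by rewrite /=; case: ifP => // /H ->.
rewrite pr1 !cons_uniq !inE negb_or.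
case/andP => /andP[hab har] /andP[hbr ur] H k.
change (foldl (@depth_step n) (depth_step t (GCNOT b a)) (pair_round rest).1 k <= if k \in [:: a, b & rest] then 1 else t k)%N.
set t1 := depth_step t _.
have Ht1 : forall k, t1 k = if (k == b) || (k == a) then 1%N else t k.
  move=> k'; rewrite /t1 /depth_step /= !big_cons big_nil !inE.
  by rewrite (H b) ?(H a) ?inE ?eqxx ?orbT.
apply: leq_trans (IH t1 ur _ k) _.
  move=> k' hk'; rewrite Ht1; case: eqP => [E|_]; first by rewrite -E hk' in hbr.
  case: eqP => [E|_]; first by rewrite -E hk' in har.
  by apply: H; rewrite !inE hk' !orbT.
rewrite Ht1 !inE; case: (k \in rest); rewrite ?orbT //.
by case: (k == a); case: (k == b).
Qed.

End Pair.

Section Depth.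
Variable n : nat.
Implicit Types (p q : pauli n) (g : gate n) (gs : seq (gate n)) (i j c a b : 'I_n) (Q rest : seq 'I_n).
Implicit Types (t : 'I_n -> nat).
Local Notation ds := (@depth_step n).

Lemma ds_mono g t t' : (forall k, t k <= t' k)%N -> forall k, (ds t g k <= ds t' g k)%N.
Proof.
move=> H k; case: g => [j|j|c0 t0]; rewrite /depth_step /= !big_cons big_nil;
case: ifP => _ //.
- by have := H j; lia.
- by have := H j; lia.
- by have := H c0; have := H t0; lia.
Qed.

Lemma ds_shift g t1 t2 (c : nat) : (forall k, t1 k = t2 k + c)%N -> forall k, (ds t1 g k = ds t2 g k + c)%N.
Proof.
move=> H k; case: g => [j|j|c0 t0]; rewrite /depth_step /= !big_cons !big_nil;
case: ifP => _ //; rewrite ?H //; lia.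
Qed.

Lemma fold_mono gs t t' : (forall k, t k <= t' k)%N ->
  forall k, (foldl ds t gs k <= foldl ds t' gs k)%N.
Proof. elim: gs t t' => [|g gs IH] t t' H //=; apply: IH; exact: ds_mono. Qed.

Lemma fold_shift gs t1 t2 (c : nat) : (forall k, t1 k = t2 k + c)%N ->
  forall k, (foldl ds t1 gs k = foldl ds t2 gs k + c)%N.
Proof. elim: gs t1 t2 => [|g gs IH] t1 t2 H //=; apply: IH; exact: ds_shift. Qed.

Lemma depth_nil : depth ([::] : seq (gate n)) = 0%N.
Proof. by rewrite /depth /=; apply/eqP; rewrite -leqn0; apply/bigmax_leqP. Qed.

Lemma depth_cat gs1 gs2 : (depth (gs1 ++ gs2) <= depth gs1 + depth gs2)%N.
Proof.
rewrite /depth foldl_cat; apply/bigmax_leqP => k _.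
set d1 := \max_(q : 'I_n) _.
apply: leq_trans (fold_mono gs2 (t' := fun _ => (0 + d1)%N) _ k) _.
  move=> k'; exact: leq_bigmax.
rewrite (fold_shift gs2 (t2 := fun _ => 0%N) (c := d1)) // addnC leq_add2l.
exact: leq_bigmax.
Qed.

Lemma depth_le gs d : (forall k, foldl ds (fun _ => 0%N) gs k <= d)%N -> (depth gs <= d)%N.
Proof. by move=> H; apply/bigmax_leqP => k _. Qed.

Lemma blk_depth u j t : t j = 0%N -> forall k, (foldl ds t (blk u j) k <= if k == j then 2 else t k)%N.
Proof.
move=> H k; rewrite /blk; case: ifP => _; last case: ifP => _.
- by rewrite /depth_step /= big_cons big_nil inE; case: ifP => _; rewrite ?H.
- rewrite /= {1}/depth_step /= !big_cons !big_nil !inE.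
  by rewrite /depth_step /= !big_cons !big_nil !inE eqxx H; case: (k == j).
- by rewrite /=; case: eqP => [->|_]; rewrite ?H.
Qed.

Lemma step1_depth u Q t : uniq Q -> (forall k, k \in Q -> t k = 0%N) ->
  forall k, (foldl ds t (step1_gates u Q) k <= if k \in Q then 2 else t k)%N.
Proof.
elim: Q t => [|j Q IH] t; first by move=> _ _ k; rewrite /= leqnn.
rewrite cons_uniq => /andP[jQ uQ] H k.
rewrite step1_cons foldl_cat.
have Hb := blk_depth u (H j (mem_head _ _)).
apply: leq_trans (IH _ uQ _ k) _.
  move=> k' hk'; apply/eqP; rewrite -leqn0; apply: leq_trans (Hb k') _.
  case: eqP => [E|_]; first by rewrite -E hk' in jQ.
  by rewrite H // inE hk' orbT.
rewrite inE; case: ifP; rewrite ?orbT //= => kQ.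
by apply: leq_trans (Hb k) _; case: eqP.
Qed.

Lemma step1_depth2 u Q : uniq Q -> (depth (step1_gates u Q) <= 2)%N.
Proof.
move=> uQ; apply: depth_le => k; apply: leq_trans (step1_depth u uQ _ k) _ => //.
by case: ifP.
Qed.

Lemma pair_depth1 Q : uniq Q -> (depth (pair_round Q).1 <= 1)%N.
Proof.
move=> uQ; apply: depth_le => k; apply: leq_trans (pair_depth uQ _ k) _ => //.
by case: ifP.
Qed.

Lemma tree_cons (f : nat) Q : (1 < size Q)%N ->
  tree_gates_fuel f.+1 Q = (pair_round Q).1 ++ tree_gates_fuel f (pair_round Q).2.
Proof. by move=> h; rewrite /= leqNgt h /=; case: (pair_round Q). Qed.

Lemma tree_small (f : nat) Q : (size Q <= 1)%N -> tree_gates_fuel f Q = [::].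
Proof. by case: f => //= f ->. Qed.

Lemma tree_qubits (f : nat) Q : all (gq Q) (tree_gates_fuel f Q).
Proof.
elim: f Q => [|f IH] Q //.
case: (leqP (size Q) 1) => h; first by rewrite tree_small.
rewrite tree_cons // all_cat pair_qubits /=.
apply: sub_all (IH _) => g; apply: sub_all => k; exact: (mem_subseq (pair_subseq Q)).
Qed.

Lemma tree_good (f : nat) Q : uniq Q -> all (fun g => good g) (tree_gates_fuel f Q).
Proof.
elim: f Q => [|f IH] Q uQ //.
case: (leqP (size Q) 1) => h; first by rewrite tree_small.
rewrite tree_cons // all_cat pair_good //=; apply: IH.
exact: subseq_uniq (pair_subseq Q) uQ.
Qed.

Lemma tree_sum (f : nat) Q p d : uniq Q -> Q != [::] -> (size Q <= f.+1)%N ->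
  xpart (apply_circuit (tree_gates_fuel f Q) p) (head d Q) = \sum_(k <- Q) xpart p k.
Proof.
elim: f Q p => [|f IH] Q p uQ nQ sQ.
  by case: Q uQ nQ sQ => [|a [|]] //= _ _ _; rewrite big_seq1.
case: (leqP (size Q) 1) => h.
  by rewrite tree_small //; case: Q uQ nQ sQ h => [|a [|]] //= _ _ _; rewrite big_seq1.
rewrite tree_cons // apply_circuit_cat -(pair_head d Q) IH.
- exact: pair_sum.
- exact: subseq_uniq (pair_subseq Q) uQ.
- by case: Q uQ nQ sQ h => [|a [|b rest]] //; rewrite pr2.
- have := pair_size Q; move: sQ h; lia.
Qed.

Lemma tree_depth (f : nat) Q k : uniq Q -> (size Q <= 2 ^ k)%N -> (depth (tree_gates_fuel f Q) <= k)%N.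
Proof.
elim: f Q k => [|f IH] Q k uQ sQ; first by rewrite depth_nil.
case: (leqP (size Q) 1) => h; first by rewrite tree_small // depth_nil.
rewrite tree_cons //; apply: leq_trans (depth_cat _ _) _.
case: k sQ => [|k] sQ; first by move: sQ h; rewrite expn0; lia.
rewrite -add1n; apply: leq_add; first exact: pair_depth1.
apply: IH; first exact: subseq_uniq (pair_subseq Q) uQ.
have := pair_size Q; move: sQ; rewrite expnS; lia.
Qed.

End Depth.

Section Symp.
Variable n : nat.
Implicit Types (p q : pauli n) (g : gate n) (gs : seq (gate n)) (i j c t : 'I_n).

Lemma char2_eq (x y z : 'F_2) : x = y + (z + z) -> x = y.
Proof. by rewrite F2_add_self addr0. Qed.

Lemma symp_gate g p q : good g -> symp (apply_gate g p) (apply_gate g q) = symp p q.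
Proof.
rewrite /symp; case: g => [j|j|c t] /= hg.
- apply: eq_bigr => i _; rewrite !xH !zH; case: (i == j) => //; exact: addrC.
- apply: eq_bigr => i _; rewrite !xS !zS; case: (i == j) => //.
  apply: (@char2_eq _ _ (xpart p i * xpart q i)); ring.
- set a := xpart p c * zpart q t + zpart p t * xpart q c.
  have E : forall i, xpart (apply_gate (GCNOT c t) p) i * zpart (apply_gate (GCNOT c t) q) i +
     zpart (apply_gate (GCNOT c t) p) i * xpart (apply_gate (GCNOT c t) q) i =
     (xpart p i * zpart q i + zpart p i * xpart q i) + (if i == c then a else 0)
     + (if i == t then a else 0).
    move=> i; rewrite !xC !zC /a.
    case: (eqVneq i c) => [Ec|hic]; case: (eqVneq i t) => [Et|hit].
    + by rewrite -Ec -Et eqxx in hg.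
    + subst i; rewrite ?(negbTE hit) ?(negbTE hg) ?addr0; ring.
    + subst i; rewrite ?eq_refl ?(negbTE hic) ?add0r ?addr0; ring.
    + by rewrite ?(negbTE hic) ?(negbTE hit) !addr0.
  rewrite (eq_bigr _ (fun i _ => E i)) !big_split /= -!big_mkcond !big_pred1_eq /=.
  by rewrite -addrA F2_add_self addr0.
Qed.

Lemma symp_circuit gs p q : all (fun g => good g) gs ->
  symp (apply_circuit gs p) (apply_circuit gs q) = symp p q.
Proof.
elim: gs p q => [|g gs IH] p q; first by [].
move=> /andP[h1 h2].
by rewrite !apply_circuit_cons IH // symp_gate.
Qed.

Lemma commuting_circuit gs (P : seq (pauli n)) : all (fun g => good g) gs ->
  commuting P -> commuting (map (apply_circuit gs) P).
Proof.
move=> hg hP p' q' /mapP[p hp ->] /mapP[q hq ->].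
by rewrite symp_circuit // hP.
Qed.

Definition linF (f : pauli n -> pauli n) := forall a p q, f (a *: p + q) = a *: f p + f q.

Lemma lin_gate g : linF (apply_gate g).
Proof.
move=> a p q; apply/rowP => k.
case: g => [j|j|c t]; rewrite /apply_gate /mkpauli /xpart /zpart !mxE;
case: (split k) => i /=; rewrite ?mxE; try case: (_ == _); ring.
Qed.

Lemma lin_circuit gs : linF (apply_circuit gs).
Proof.
elim: gs => [|g gs IH] a p q //.
by rewrite !apply_circuit_cons lin_gate IH.
Qed.

Lemma lin_restr R : linF (restr R).
Proof.
move=> a p q; apply/rowP => k; rewrite /restr !mxE; case: ifP => _; rewrite ?mxE //.
by rewrite mulr0 addr0.
Qed.

Lemma lin_mx f : linF f -> forall u, f u = u *m lin1_mx f.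
Proof.
move=> hf.
have f0 : f 0 = 0.
  have := hf 1 0 0; rewrite !scale1r addr0 => /(congr1 (fun x => x - f 0)) /=.
  by rewrite subrr addrK => <-.
have fD : {morph f : x y / x + y}.
  by move=> x y; rewrite -{1}[x]scale1r hf scale1r.
have fZ : forall a x, f (a *: x) = a *: f x by move=> a x; rewrite -[a *: x]addr0 hf f0 addr0.
move=> u; rewrite {1}[u]row_sum_delta (big_morph f fD f0).
apply/rowP => k; rewrite !mxE summxE; apply: eq_bigr => j _.
by rewrite fZ !mxE.
Qed.

Lemma tableau_row (ops : seq (pauli n)) (i : 'I_(size ops)) : row i (tableau ops) = nth 0 ops i.
Proof. by apply/rowP => k; rewrite !mxE. Qed.

Lemma ngen_lin f (ops : seq (pauli n)) : linF f -> (ngen (map f ops) <= ngen ops)%N.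
Proof.
move=> hf; rewrite /ngen.
apply: leq_trans (mxrankM_maxl _ (lin1_mx f)).
apply: mxrankS; apply/row_subP => i.
have hi : (i < size ops)%N by case: i => /= k; rewrite size_map.
rewrite tableau_row (nth_map 0) //.
rewrite (lin_mx hf) -(tableau_row (Ordinal hi)); apply: submxMr; exact: row_sub.
Qed.

End Symp.

Section Stage.
Variable n : nat.
Implicit Types (p q : pauli n) (g : gate n) (gs : seq (gate n)) (i j c t : 'I_n) (Q : seq 'I_n).
Implicit Types (u : 'cV['F_2]_(n + n)) (ops : seq (pauli n)).

Lemma dot_expand p u : (p *m u) 0 0 =
  \sum_(j < n) (xpart p j * vpart u j + zpart p j * wpart u j).
Proof. by rewrite mxE big_split_ord /= -big_split. Qed.

Lemma qubit_l j : qubit_of (lshift n j) = j.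
Proof. by rewrite /qubit_of split_l. Qed.
Lemma qubit_r j : qubit_of (rshift n j) = j.
Proof. by rewrite /qubit_of split_r. Qed.

Lemma supp_coord u k : u k 0 != 0 -> qubit_of k \in supp u.
Proof.
case: (split_ordP k) => j -> h; rewrite ?qubit_l ?qubit_r /supp inE /vpart /wpart h ?orbT //.
Qed.

Lemma dot_restr (R : {set 'I_n}) p u : supp u \subset R -> restr R p *m u = p *m u.
Proof.
move=> hs; apply/matrixP => i0 j0; rewrite [i0]ord1 [j0]ord1 !mxE; apply: eq_bigr => k _.
rewrite mxE; case: ifP => // /negbT hk.
case: (eqVneq (u k 0) 0) => [->|h]; first by rewrite !mulr0.
by have := subsetP hs _ (supp_coord h); rewrite (negbTE hk).
Qed.

Lemma sum_Q u Q (F : 'I_n -> 'F_2) : uniq Q -> Q =i supp u ->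
  (forall j, j \notin supp u -> F j = 0) -> \sum_(k <- Q) F k = \sum_(j < n) F j.
Proof.
move=> uQ hQ hF; rewrite big_uniq // big_mkcond; apply: eq_bigr => j _.
by case: ifP => // /negbT; rewrite hQ => /hF ->.
Qed.

Lemma supp0 u j : j \notin supp u -> vpart u j = 0 /\ wpart u j = 0.
Proof. by rewrite /supp inE negb_or !negbK => /andP[/eqP -> /eqP ->]. Qed.

Lemma step1_good u Q : all (fun g => good g) (step1_gates u Q).
Proof.
elim: Q => [|j Q IH] //; rewrite step1_cons all_cat IH andbT /blk.
by case: ifP => _ //; case: ifP.
Qed.

Lemma stage_good (ch : choice n) : uniq (ch_Q ch) -> all (fun g => good g) (stage_gates ch).
Proof. by move=> uQ; rewrite /stage_gates all_cat step1_good tree_good. Qed.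

Lemma stage_qubits (ch : choice n) : all (gq (ch_Q ch)) (stage_gates ch).
Proof.
rewrite /stage_gates all_cat tree_qubits andbT.
apply: sub_all (step1_qubits _ _) => g; by [].
Qed.

Lemma stage_untouched (ch : choice n) p i : i \notin ch_Q ch ->
  xpart (apply_circuit (stage_gates ch) p) i = xpart p i.
Proof.
move=> hi; have H : all (fun g => i \notin gate_qubits g) (stage_gates ch).
  apply: sub_all (stage_qubits ch) => g /allP h; apply/negP => /h; by rewrite (negbTE hi).
by have [-> _] := circuit_untouched p H.
Qed.

Lemma stage_head (ch : choice n) p h Q' : ch_Q ch = h :: Q' -> uniq (ch_Q ch) ->
  ch_Q ch =i supp (ch_u ch) -> (p *m ch_u ch) 0 0 = 0 ->
  xpart (apply_circuit (stage_gates ch) p) h = 0.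
Proof.
move=> EQ uQ hQ hp.
rewrite /stage_gates apply_circuit_cat /step2_gates.
have -> : h = head h (ch_Q ch) by rewrite EQ.
rewrite tree_sum //; last by rewrite EQ.
rewrite (eq_big_seq (fun k => vpart (ch_u ch) k * xpart p k + wpart (ch_u ch) k * zpart p k)).
  rewrite (sum_Q uQ hQ); last by move=> j /supp0 [-> ->]; rewrite !mul0r addr0.
  apply: (etrans _ hp); rewrite dot_expand; apply: eq_bigr => j _; rewrite mulrC [zpart _ _ * _]mulrC //.
move=> k hk; rewrite step1_x // ?hk // => x; by rewrite hQ.
Qed.

End Stage.

Section Run.
Variable n : nat.
Implicit Types (p q : pauli n) (g : gate n) (gs : seq (gate n)) (i j c t : 'I_n) (Q : seq 'I_n).
Implicit Types (u : 'cV['F_2]_(n + n)) (ops : seq (pauli n)) (ch : choice n) (chs : seq (choice n)).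

Lemma mem_rem ops j : (j \in remaining ops) = has (fun p => xpart p j != 0) ops.
Proof. by rewrite /remaining inE -has_predC. Qed.

Lemma row_restr ops p : p \in ops -> (restr (remaining ops) p <= restr_tableau ops)%MS.
Proof.
move=> hp; have hi : (index p ops < size (map (restr (remaining ops)) ops))%N.
  by rewrite size_map index_mem.
have E : restr (remaining ops) p = nth 0 (map (restr (remaining ops)) ops) (index p ops).
  by rewrite (nth_map 0) ?index_mem // nth_index.
by rewrite /restr_tableau E -(tableau_row (Ordinal hi)) row_sub.
Qed.

Lemma valid_dot ops ch p : valid_stage ops ch -> p \in ops -> (p *m ch_u ch) 0 0 = 0.
Proof.
case=> [[hrem hfree hM hu0 hMu] [hsupp hw uQ hQ]] hp.
have := row_restr hp; move: hM; rewrite /eqmx => /andP[_ h1] h2.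
have /submxP[X EX] := submx_trans h2 h1.
by rewrite -(dot_restr _ hsupp) EX -mulmxA (eqP hMu) mulmx0 mxE.
Qed.

Lemma stage_dec ops ch : valid_stage ops ch ->
  (#|remaining (apply_stage ops ch)| < #|remaining ops|)%N.
Proof.
move=> hv; have hv' := hv; case: hv' => [[hrem hfree hM hu0 hMu] [hsupp hw uQ hQ]].
case EQ: (ch_Q ch) => [|h Q'].
  case/cV0Pn: hu0 => k hk; exfalso.
  by have := supp_coord hk; rewrite -hQ EQ.
have hh : h \in remaining ops by apply: (subsetP hsupp); rewrite -hQ EQ mem_head.
rewrite (cardsD1 h (remaining ops)) hh add1n ltnS; apply: subset_leq_card.
apply/subsetP => j; rewrite in_setD1 !mem_rem /apply_stage => /hasP[p' /mapP[p hp ->] hx].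
apply/andP; split.
  apply/eqP => E; move: hx; rewrite E (stage_head EQ uQ hQ) ?eqxx //.
  exact: valid_dot hv hp.
case: (boolP (j \in ch_Q ch)) => hjQ.
  by rewrite -mem_rem; apply: (subsetP hsupp); rewrite -hQ.
by move: hx; rewrite stage_untouched // => hx; apply/hasP; exists p.
Qed.

End Run.

Section W.
Variable n : nat.
Implicit Types (S : {set 'I_n}).

Definition W S : 'M['F_2]_(n + n) :=
  (\sum_(k | qubit_of k \in S) <<delta_mx 0 k : 'rV['F_2]_(n + n)>>)%MS.

Lemma card_coords S : #|[pred k : 'I_(n + n) | qubit_of k \in S]| = (#|S| + #|S|)%N.
Proof.
rewrite -[LHS]sum1_card big_split_ord /=.
rewrite (eq_bigl (fun i => i \in S)); last by move=> i; rewrite inE /= qubit_l.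
rewrite [X in (_ + X)%N](eq_bigl (fun i => i \in S)); last by move=> i; rewrite inE /= qubit_r.
by rewrite sum1_card.
Qed.

Lemma rank_W S : \rank (W S) = (#|S| + #|S|)%N.
Proof.
have := @mxdirect_delta 'F_2 _ [pred k : 'I_(n + n) | qubit_of k \in S] (n + n) id.
move=> /(_ (fun x y _ _ => id)) /mxdirectP /= ->.
rewrite -card_coords -sum1_card; apply: eq_bigr => k _.
by rewrite mxrank_gen mxrank_delta.
Qed.

Lemma W_supp S (y : 'rV['F_2]_(n + n)) k : (y <= W S)%MS -> qubit_of k \notin S -> y 0 k = 0.
Proof.
move=> hy hk.
have : (W S <= kermx (delta_mx k 0 : 'cV['F_2]_(n + n)))%MS.
  apply/sumsmx_subP => i hi; rewrite genmxE; apply/sub_kermxP; rewrite mul_delta_mx_0 //.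
  by apply: contraNneq hk => <-.
move=> /(submx_trans hy) /sub_kermxP; rewrite -colE => /matrixP /(_ 0 0).
by rewrite !mxE.
Qed.

End W.

Section Exist.
Variable n : nat.
Implicit Types (p q : pauli n) (ops : seq (pauli n)) (j : 'I_n) (R : {set 'I_n}).

Definition cvec q : 'cV['F_2]_(n + n) :=
  \col_k (match split k with inl j => zpart q j | inr j => xpart q j end).

Lemma cvec_symp p q : (p *m cvec q) 0 0 = symp p q.
Proof.
rewrite mxE big_split_ord /symp big_split /=; congr (_ + _); apply: eq_bigr => j _;
by rewrite !mxE ?split_l ?split_r.
Qed.

Lemma xrestr R p j : xpart (restr R p) j = if j \in R then xpart p j else 0.
Proof. by rewrite /xpart /restr mxE qubit_l. Qed.
Lemma zrestr R p j : zpart (restr R p) j = if j \in R then zpart p j else 0.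
Proof. by rewrite /zpart /restr mxE qubit_r. Qed.

Lemma symp_restr ops p q : p \in ops -> q \in ops ->
  symp (restr (remaining ops) p) (restr (remaining ops) q) = symp p q.
Proof.
move=> hp hq; apply: eq_bigr => j _; rewrite !xrestr !zrestr; case: ifP => // /negbT.
rewrite mem_rem => /hasPn H.
by rewrite (eqP (negbNE (H p hp))) (eqP (negbNE (H q hq))) !mul0r !mulr0 addr0.
Qed.

Lemma A_cvec ops p0 : commuting ops -> p0 \in ops ->
  restr_tableau ops *m cvec (restr (remaining ops) p0) = 0.
Proof.
move=> hc hp0; apply/matrixP => i j; rewrite [j]ord1 [RHS]mxE.
have hi : (i < size ops)%N by case: i => /= k; rewrite size_map.
transitivity ((row i (restr_tableau ops *m cvec (restr (remaining ops) p0))) 0 0).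
  by rewrite [RHS]mxE.
rewrite row_mul tableau_row cvec_symp (nth_map 0) // symp_restr ?mem_nth //.
by apply: hc; rewrite ?mem_nth.
Qed.

Lemma exists_stage ops : commuting ops -> remaining ops != set0 ->
  exists ch : choice n, valid_stage ops ch.
Proof.
move=> hc hR.
set R := remaining ops; set A := restr_tableau ops; set r := \rank A.
suff [u [hu0 hAu hsR hw]] : exists u : 'cV['F_2]_(n + n),
    [/\ u != 0, A *m u = 0, supp u \subset R & (sweight u <= r + 1)%N].
  exists (MkChoice (row_base A) u (enum (supp u))); split; split => //=.
  - exact: row_base_free.
  - apply/eqmxP; exact: eq_row_base.
  - have /submxP[X ->] : (row_base A <= A)%MS by rewrite eq_row_base.
    by rewrite -mulmxA hAu mulmx0.
  - exact: enum_uniq.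
  - by move=> x; rewrite mem_enum.
case: (leqP #|R| r.+1) => hRr.
  case/set0Pn: (hR) => j0 hj0; have := hj0; rewrite mem_rem => /hasP[p0 hp0 hx0].
  exists (cvec (restr R p0)); split.
  - by apply/cV0Pn; exists (rshift n j0); rewrite mxE split_r xrestr hj0.
  - exact: A_cvec.
  - apply/subsetP => j; rewrite /supp inE /vpart /wpart !mxE split_l split_r xrestr zrestr.
    by case: ifP => //; rewrite eqxx.
  - rewrite addn1; apply: leq_trans hRr; apply: subset_leq_card.
    apply/subsetP => j; rewrite /supp inE /vpart /wpart !mxE split_l split_r xrestr zrestr.
    by case: ifP => //; rewrite eqxx.
set S := [set x in take r.+1 (enum R)].
have cS : #|S| = r.+1.
  rewrite cardsE (card_uniqP _) ?take_uniq ?enum_uniq // size_takel // -cardE.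
  exact: ltnW.
have SR : S \subset R by apply/subsetP => x; rewrite inE => /mem_take; rewrite mem_enum.
have hK := mxrank_mul_ker (W S) A^T; rewrite rank_W cS in hK.
have hle : (\rank (W S *m A^T) <= r)%N.
  by apply: leq_trans (mxrankM_maxr _ _) _; rewrite mxrank_tr.
have : (W S :&: kermx A^T)%MS != 0.
  by rewrite -mxrank_eq0; apply/eqP => E; move: hK; rewrite E addn0 => h; move: hle; rewrite h addSn ltnNge leq_addr.
case/matrix0Pn => i [j hij].
set y := row i (W S :&: kermx A^T)%MS.
have hyK : (y <= (W S :&: kermx A^T))%MS := row_sub i _.
have hyW : (y <= W S)%MS := submx_trans hyK (capmxSl _ _).
have hyA : y *m A^T = 0 by apply/sub_kermxP; exact: submx_trans hyK (capmxSr _ _).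
have hyj : y 0 j != 0 by rewrite mxE.
clearbody y.
have hsS : supp y^T \subset S.
  apply/subsetP => x; apply: contraLR => hx.
  rewrite /supp inE negb_or !negbK /vpart /wpart !mxE.
  by rewrite !(W_supp hyW) ?qubit_l ?qubit_r ?eqxx.
exists y^T; split.
- by apply/cV0Pn; exists j; rewrite mxE.
- by rewrite -(trmxK A) -trmx_mul hyA trmx0.
- exact: subset_trans hsS SR.
- by rewrite /sweight addn1 -cS; apply: subset_leq_card.
Qed.

End Exist.

Section Main.
Variable n : nat.
Implicit Types (p q : pauli n) (ops : seq (pauli n)) (ch : choice n) (chs : seq (choice n)).

Lemma run_size ops chs : valid_run ops chs -> (size chs <= #|remaining ops|)%N.
Proof.
elim: chs ops => [|ch chs IH] ops //= [hv hr].
apply: leq_trans (stage_dec hv); exact: IH.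
Qed.

Lemma final_eq ops chs : final_ops ops chs = map (apply_circuit (output_circuit chs)) ops.
Proof.
elim: chs ops => [|ch chs IH] ops /=; first by rewrite map_id_in.
rewrite /final_ops /= -/(final_ops _ _) IH /apply_stage -map_comp.
by apply: eq_map => p /=; rewrite /output_circuit /= apply_circuit_cat.
Qed.

Lemma run_comm ops chs : valid_run ops chs -> commuting ops -> commuting (final_ops ops chs).
Proof.
elim: chs ops => [|ch chs IH] ops //= [hv hr] hc.
rewrite /final_ops /= -/(final_ops _ _); apply: IH => //.
apply: commuting_circuit => //; apply: stage_good.
by case: hv => _ [].
Qed.

Lemma stage_depth ops ch : valid_stage ops ch ->
  (depth (stage_gates ch) <= 3 * (trunc_log 2 (ch_r ch)).+1)%N.
Proof.
case=> [[hrem hfree hM hu0 hMu] [hsupp hw uQ hQ]].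
rewrite /stage_gates; apply: leq_trans (depth_cat _ _) _.
have h1 := step1_depth2 (ch_u ch) uQ.
have h2 : (depth (step2_gates (ch_Q ch)) <= (trunc_log 2 (ch_r ch)).+1)%N.
  apply: tree_depth => //.
  have -> : size (ch_Q ch) = sweight (ch_u ch).
    by rewrite -(card_uniqP uQ) /sweight; apply: eq_card.
  apply: leq_trans hw _; rewrite addn1; exact: trunc_log_ltn.
move: h1 h2; lia.
Qed.

Lemma r_bound ops ch : valid_stage ops ch -> (ch_r ch <= ngen ops)%N.
Proof.
case=> [[hrem hfree hM hu0 hMu] _].
rewrite -(eqP hfree) (eqmx_rank hM) /restr_tableau.
exact: ngen_lin (lin_restr _).
Qed.

Lemma ngen_stage ops ch : (ngen (apply_stage ops ch) <= ngen ops)%N.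
Proof. exact: ngen_lin (lin_circuit _). Qed.

Lemma run_depth ops chs : valid_run ops chs ->
  (forall i, (i < size chs)%N ->
     let ch := nth (@MkChoice n 0%N 0 0 [::]) chs i in
     (depth (stage_gates ch) <= 3 * (trunc_log 2 (ch_r ch)).+1)%N) /\
  (depth (output_circuit chs) <= size chs * (3 * (trunc_log 2 (ngen ops)).+1))%N.
Proof.
elim: chs ops => [|ch chs IH] ops /=.
  by move=> _; split => //; rewrite /output_circuit /= depth_nil.
case=> hv hr; have [IH1 IH2] := IH _ hr; split.
  by case=> [|i] /= hi; [exact: stage_depth hv | exact: IH1].
rewrite /output_circuit /= -/(output_circuit chs).
apply: leq_trans (depth_cat _ _) _; rewrite mulSn leq_add //.
  apply: leq_trans (stage_depth hv) _; rewrite leq_mul2l /= ltnS.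
  apply: leq_trunc_log; exact: r_bound hv.
apply: leq_trans IH2 _; rewrite leq_mul2l leq_mul2l /= ltnS orbC; apply/orP; left.
apply: leq_trunc_log; exact: ngen_stage.
Qed.

Lemma notdiag_rem ops : ~~ all_diag ops -> remaining ops != set0.
Proof.
case/allPn => p hp /forallPn [j hj]; apply/set0Pn; exists j.
by rewrite mem_rem; apply/hasP; exists p.
Qed.

End Main.

Theorem mainTheorem6 :
  exists C : nat,
  forall (n : nat) (P : seq (pauli n)),
    commuting P ->
    forall chs : seq (choice n), valid_run P chs ->
      [/\ (size chs <= n)%N,
          (* the algorithm never gets stuck: a valid next stage exists *)
          ~~ all_diag (final_ops P chs) ->
            exists ch : choice n, valid_stage (final_ops P chs) ch
        & all_diag (final_ops P chs) ->
          [/\ all_diag (map (apply_circuit (output_circuit chs)) P),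
              (forall i, (i < size chs)%N ->
                 let ch := nth (@MkChoice n 0%N 0 0 [::]) chs i in
                 (depth (stage_gates ch) <= C * (trunc_log 2 (ch_r ch)).+1)%N)
            & (depth (output_circuit chs) <= C * n * (trunc_log 2 (ngen P)).+1)%N]].
Proof.
exists 3 => n P hc chs hr.
have hsz : (size chs <= n)%N.
  apply: leq_trans (run_size hr) _; rewrite -[X in (_ <= X)%N]card_ord; exact: max_card.
split => //.
  move=> hnd; apply: exists_stage; first exact: run_comm.
  exact: notdiag_rem.
move=> hd; have [D1 D2] := run_depth hr; split => //.
  by rewrite -final_eq.
apply: leq_trans D2 _.
have -> : (3 * n * (trunc_log 2 (ngen P)).+1 = n * (3 * (trunc_log 2 (ngen P)).+1))%N.
  by rewrite mulnCA mulnA.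
by rewrite leq_mul2r hsz orbT.
Qed.
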